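(* Let $m\ge3$ and let $\{X_n\}$ be a sequence of finite connected $2$-connected graphs such that for each $n$ the number $N_n$ of maximal spanning trees of $X_n$ not containing a given edge is independent of the edge, and $\mathrm{girth}(X_n)\to\infty$. Let $\widetilde{X}_n$ be the $\mathbb{Z}_m$-homology cover of $X_n$. Let $d$ be the coarse disjoint union metric on $\bigsqcup_n\widetilde{X}_n$ restricting to the graph metric on each $\widetilde{X}_n$, and $d_Q$ the coarse disjoint union metric restricting to $d_{Q_n}$ on each $\widetilde{X}_n$. Then the identity map $(\bigsqcup_n\widetilde{X}_n,d)\to(\bigsqcup_n\widetilde{X}_n,d_Q)$ is a coarse equivalence, i.e. it and its inverse are coarse embeddings.
   Context: A graph is $2$-connected if removing any single edge leaves it connected; girth is the length of a shortest cycle. $\mathbb{Z}_m$-homology cover of a finite connected graph $X$: fix orientations of the edges; for a maximal spanning tree $T$ with complementary edges $e_1,\dots,e_r$ (a free basis of $\pi_1(X)$), let $\rho:\pi_1(X)\to K=\pi_1(X)/[\pi_1(X),\pi_1(X)]\pi_1(X)^m\cong\oplus^r\mathbb{Z}_m$; $\widetilde{X}$ has vertices $V(X)\times K$, edges $E(X)\times K$, where for $e$ from $v$ to $w$ the edge $(e,k)$ joins $(v,k)$ to $(w,k)$ if $e\in T$ and to $(w,\rho(e)k)$ if $e\notin T$. For a maximal tree $T$, clouds are the sets $V(X)\times\{k\}$; $C^T_x$ is the cloud containing $x$, identified with an element of $\oplus^r\mathbb{Z}_m$; $d_T$ is the word metric on $\oplus^r\mathbb{Z}_m$ with respect to $\rho(e_1),\dots,\rho(e_r)$.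 On $\widetilde{X}_n$, $d_{Q_n}(x,y)=\frac{1}{N_n}\sum_T d_T(C^T_x,C^T_y)$, summing over all maximal spanning trees $T$ of $X_n$. A coarse disjoint union metric restricts to the given metric on each component, with distances between distinct components larger than their diameters and tending to infinity. A coarse embedding is a map with non-decreasing $\rho_\pm\to\infty$ and $\rho_-(d(x,x'))\le d'(F(x),F(x'))\le\rho_+(d(x,x'))$. *)

(* Defs.v *)
From HB Require Import structures.
From mathcomp Require Import all_boot all_order all_algebra.
Set Implicit Arguments. Unset Strict Implicit. Unset Printing Implicit Defensive.
Import Order.TTheory GRing.Theory Num.Theory.

(* (Loops and multiple edges are allowed; the orientation is the fixed       *)
(* orientation used in the construction of homology covers.)                 *)
Section Graphs.
Variables (V E : finType) (src tgt : E -> V).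

Definition adjS (S : {set E}) : rel V :=
  fun u w => [exists e in S, ((src e == u) && (tgt e == w))
                          || ((src e == w) && (tgt e == u))].

Definition connected_graph : Prop := forall u w, connect (adjS [set: E]) u w.

(* "2-connected": removing any single edge leaves the graph connected *)
Definition two_connected : Prop :=
  forall e0 : E, forall u w, connect (adjS [set~ e0]) u w.

(* darts: an edge traversed forwards (true) or backwards (false) *)
Definition dtail (d : E * bool) : V := if d.2 then src d.1 else tgt d.1.
Definition dhead (d : E * bool) : V := if d.2 then tgt d.1 else src d.1.

Definition is_cycle (ds : seq (E * bool)) : bool :=
  [&& ds != [::], cycle (fun d1 d2 => dhead d1 == dtail d2) ds,
      uniq (map fst ds) & uniq (map dtail ds)].

Definition girth_ge (L : nat) : Prop :=
  forall ds, is_cycle ds -> (L <= size ds)%N.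

(* boolean form: cycles have pairwise distinct edges, hence length <= #|E|,
   so quantifying over walks of length <= #|E| covers all cycles *)
Definition spanning_treeb (T : {set E}) : bool :=
  [forall u, forall w, connect (adjS T) u w] &&
  [forall n : 'I_(#|E|.+1), forall ds : n.-tuple (E * bool),
     ~~ (is_cycle ds && all (fun d => d.1 \in T) ds)].

(* The Z_m-homology cover, in its intrinsic (chain) model: fix a base vertex *)
(* v0; vertices are pairs (v, c) with c a Z_m-valued 1-chain whose boundary  *)
(* is v - v0 (c is the homology class of a path from v0 to v); the edge      *)
(* (e, c) joins (src e, c) to (tgt e, c + e).  For a maximal tree T with     *)
(* complementary edges e_1..e_r this is isomorphic (over X) to the graph     *)
(* with vertices V x (Z_m)^r of the paper, via (v,k) |-> [T-path v0->v] +    *)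
(* sum_i k_i z_i (z_i the fundamental cycle of e_i), and under it the cloud  *)
(* C^T_x of x = (v, c) is the vector (c(e_1), ..., c(e_r)).                  *)
Variable m : nat.

Local Notation chain := {ffun E -> 'Z_m}.

Definition bnd (c : chain) : {ffun V -> 'Z_m} :=
  [ffun u => (\sum_(e | tgt e == u) c e - \sum_(e | src e == u) c e)%R].

Definition vdelta (v : V) : {ffun V -> 'Z_m} := [ffun u => ((u == v)%:R)%R].

Definition edelta (e : E) : chain := [ffun f => ((f == e)%:R)%R].

Definition cover_pred (v0 : V) (p : V * chain) : bool :=
  bnd p.2 == (vdelta p.1 - vdelta v0)%R.

Definition cover_vtx (v0 : V) : Type := {p : V * chain | cover_pred v0 p}.

Definition cover_adj (v0 : V) : rel (cover_vtx v0) :=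
  fun x y => [exists e : E,
     ((val x).1 == src e) && ((val y).1 == tgt e) && ((val y).2 == (val x).2 + edelta e)%R
  || ((val y).1 == src e) && ((val x).1 == tgt e) && ((val x).2 == (val y).2 + edelta e)%R].

(* cloud of x w.r.t. T: the coordinates of x on the edges not in T,
   i.e. an element of the subgroup (+)_{e \notin T} Z_m edelta e *)
Definition cloud (T : {set E}) (c : chain) : chain :=
  [ffun e => if e \in T then 0%R else c e].

End Graphs.

(* graph metric of a finite graph given by its adjacency relation:
   the least length of a walk from x to y (walks of length < #|T| suffice) *)
Definition walk_len (T : finType) (adj : rel T) (x y : T) (k : nat) : bool :=
  [exists p : k.-tuple T, path adj x p && (last x p == y)].

Definition gdist (T : finType) (adj : rel T) (x y : T) : nat :=
  find (walk_len adj x y) (iota 0 #|T|).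

(* word metric on the group {ffun E -> Z_m} (restricted to the subgroup
   (+)_{e \in Is} Z_m edelta e ~ (+)^r Z_m) w.r.t. the generators
   {edelta e | e \in Is} and their inverses: the least length of a word in
   the edelta e^{+-1} (e \in Is) equal to -a + b.  (Words of length
   < #|{ffun E -> Z_m}| suffice.) *)
Definition word_len (E : finType) (m : nat) (Is : {set E})
    (a b : {ffun E -> 'Z_m}) (k : nat) : bool :=
  [exists w : k.-tuple (E * bool),
     all (fun p => p.1 \in Is) w &&
     ((\sum_(p <- w) (if p.2 then edelta m p.1 else - edelta m p.1))%R == (b - a)%R)].

Definition word_dist (E : finType) (m : nat) (Is : {set E})
    (a b : {ffun E -> 'Z_m}) : nat :=
  find (word_len Is a b) (iota 0 #|{ffun E -> 'Z_m}|).

Definition dQn (R : realFieldType) (V E : finType) (src tgt : E -> V) (m : nat)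
    (v0 : V) (N : nat) (x y : cover_vtx src tgt m v0) : R :=
  (N%:R^-1 * \sum_(T : {set E} | spanning_treeb src tgt T)
     (word_dist (~: T) (cloud T (val x).2) (cloud T (val y).2))%:R)%R.

Local Open Scope ring_scope.

Definition is_metric (R : realFieldType) (X : Type) (d : X -> X -> R) : Prop :=
  (forall x, d x x = 0) /\ (forall x y, x <> y -> 0 < d x y) /\
  (forall x y, d x y = d y x) /\ (forall x y z, d x z <= d x y + d y z).

Definition coarse_disjoint_union (R : realFieldType) (T : nat -> Type)
    (dn : forall n, T n -> T n -> R) (d : {n : nat & T n} -> {n : nat & T n} -> R) : Prop :=
  is_metric d /\
  (forall n (a b : T n), d (existT _ n a) (existT _ n b) = dn n a b) /\
  (forall n k, n <> k -> forall (a : T n) (b : T k),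
      (forall a1 a2 : T n, dn n a1 a2 < d (existT _ n a) (existT _ k b)) /\
      (forall b1 b2 : T k, dn k b1 b2 < d (existT _ n a) (existT _ k b))) /\
  (forall M : R, exists N0 : nat, forall n k, n <> k -> (N0 <= maxn n k)%N ->
      forall (a : T n) (b : T k), M <= d (existT _ n a) (existT _ k b)).

Definition nondecreasing_fun (R : realFieldType) (f : R -> R) : Prop :=
  forall s t, s <= t -> f s <= f t.

Definition tends_to_infty (R : realFieldType) (f : R -> R) : Prop :=
  forall M, exists t0, forall t, t0 <= t -> M <= f t.

Definition coarse_embedding (R : realFieldType) (X Y : Type)
    (dX : X -> X -> R) (dY : Y -> Y -> R) (F : X -> Y) : Prop :=
  exists rm rp : R -> R,
    nondecreasing_fun rm /\ nondecreasing_fun rp /\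
    tends_to_infty rm /\ tends_to_infty rp /\
    forall x x', rm (dX x x') <= dY (F x) (F x') /\ dY (F x) (F x') <= rp (dX x x').

(* Main.v *)
Require Import Defs.
From HB Require Import structures.
From mathcomp Require Import all_boot all_order all_algebra.
From Stdlib Require Import ClassicalEpsilon Classical.
Set Implicit Arguments. Unset Strict Implicit. Unset Printing Implicit Defensive.
Import Order.TTheory GRing.Theory Num.Theory.

Section G.
Variables (V E : finType) (src tgt : E -> V) (m : nat).
Local Notation chain := {ffun E -> 'Z_m}.
Local Open Scope ring_scope.
Local Notation bnd := (bnd src tgt).
Local Notation edelta := (edelta m).
Local Notation vdelta := (vdelta m).

Lemma ffD (f g : chain) x : (f + g) x = f x + g x.
Proof. by rewrite ffunE. Qed.
Lemma ffN (f : chain) x : (- f) x = - f x.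
Proof. by rewrite ffunE. Qed.

Lemma bndD (c1 c2 : chain) : bnd (c1 + c2) = bnd c1 + bnd c2.
Proof.
apply/ffunP=> u; rewrite !ffunE.
under eq_bigr do rewrite ffD.
under [X in _ - X]eq_bigr do rewrite ffD.
rewrite !big_split /=; rewrite opprD addrACA //.
Qed.

Lemma bndN (c : chain) : bnd (- c) = - bnd c.
Proof.
apply/ffunP=> u; rewrite !ffunE.
under eq_bigr do rewrite ffN.
under [X in _ - X]eq_bigr do rewrite ffN.
by rewrite !sumrN opprB opprK addrC.
Qed.

Lemma sum_edelta (P : pred E) e : \sum_(f | P f) edelta e f = (P e)%:R.
Proof.
rewrite big_mkcond (bigD1 e) //= big1 => [|f fe]; last by rewrite ffunE (negbTE fe); case: (P f).
by rewrite ffunE eqxx addr0; case: (P e).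
Qed.

Lemma bnd_edelta e : bnd (edelta e) = vdelta (tgt e) - vdelta (src e).
Proof.
apply/ffunP=> u; rewrite !ffunE !sum_edelta /=.
by rewrite (eq_sym u) (eq_sym u).
Qed.

Local Notation dtl := (dtail src tgt).
Local Notation dhd := (dhead src tgt).

Definition dch (d : E * bool) : chain := if d.2 then edelta d.1 else - edelta d.1.

Fixpoint walkb (x : V) (ds : seq (E * bool)) : bool :=
  if ds is d :: ds' then (dtl d == x) && walkb (dhd d) ds' else true.
Definition wend x ds := last x (map dhd ds).
Definition chn (ds : seq (E * bool)) : chain := \sum_(d <- ds) dch d.

Lemma bnd0 : bnd (0 : chain) = 0.
Proof. by have := bndD 0 0; rewrite addr0 => /(canLR (addrK _)); rewrite subrr. Qed.

Lemma bnd_dch d : bnd (dch d) = vdelta (dhd d) - vdelta (dtl d).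
Proof.
case: d => e [] /=; rewrite /dch /dhead /dtail /=; first exact: bnd_edelta.
by rewrite bndN bnd_edelta opprB.
Qed.

Lemma bnd_chn x ds : walkb x ds -> bnd (chn ds) = vdelta (wend x ds) - vdelta x.
Proof.
elim: ds x => [|d ds IH] x /=.
  by rewrite /chn big_nil /wend /= subrr bnd0.
case/andP=> /eqP <- Hw; rewrite /chn big_cons bndD -/(chn ds) (IH _ Hw) bnd_dch.
by rewrite /wend /= addrC addrA subrK.
Qed.

Lemma darts_of_path S x p : path (adjS src tgt S) x p ->
  exists ds, [/\ walkb x ds, map dhd ds = p & all (fun d => d.1 \in S) ds].
Proof.
elim: p x => [|y p IH] x /=; first by exists [::].
case/andP=> /existsP [e /andP [eS He]] /IH [ds [Hw Hm Ha]].
case/orP: He => /andP [/eqP Hs /eqP Ht].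
  exists ((e, true) :: ds); rewrite /= /dtail /dhead /= Hs eqxx /= Ht Hw Hm eS Ha //.
exists ((e, false) :: ds); rewrite /= /dtail /dhead /= Ht eqxx /= Hs Hw Hm eS Ha //.
Qed.

Lemma walk_tails x ds : walkb x ds -> map dtl ds = belast x (map dhd ds).
Proof.
elim: ds x => [|d ds IH] x //= /andP [/eqP <- Hw]; by rewrite (IH _ Hw).
Qed.

Lemma dart_ends d v : (v == src d.1) || (v == tgt d.1) = (v == dtl d) || (v == dhd d).
Proof. by case: d => e [] //=; rewrite orbC. Qed.

Lemma walk_ends_in x ds d : walkb x ds -> d \in ds ->
  (dtl d \in x :: map dhd ds) && (dhd d \in map dhd ds).
Proof.
move=> Hw Hd; rewrite (map_f _ Hd) andbT.
have := map_f dtl Hd; rewrite (walk_tails Hw) => H.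
by apply: (subsetP _ _ H); apply/subsetP => z; exact: mem_belast.
Qed.

Lemma walk_uniq_edges x ds : walkb x ds -> uniq (x :: map dhd ds) -> uniq (map fst ds).
Proof.
elim: ds x => [|d ds IH] x //= /andP [/eqP Hx Hw] /andP [Hxn Hu].
rewrite (IH _ Hw Hu) andbT; apply/mapP => [[d' Hd' He]].
have := walk_ends_in Hw Hd'; case/andP => H1 H2.
have : (x == src d.1) || (x == tgt d.1) by rewrite dart_ends Hx eqxx.
rewrite He dart_ends; case/orP => /eqP Hxe.
  by move: Hxn; rewrite Hxe H1.
by move: Hxn; rewrite Hxe inE H2 orbT.
Qed.

Lemma walk_cycle_path d0 d ds : walkb (dhd d) ds -> wend (dhd d) ds = dtl d0 ->
  path (fun d1 d2 => dhd d1 == dtl d2) d (rcons ds d0).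
Proof.
elim: ds d => [|d' ds IH] d /=; first by rewrite /wend /= => _ ->; rewrite eqxx.
case/andP => /eqP Hd' Hw He; rewrite Hd' eqxx /=; exact: IH.
Qed.

Lemma size_uniq_le (S : {set E}) (ds : seq (E * bool)) :
  uniq (map fst ds) -> all (fun d => d.1 \in S) ds -> (size ds <= #|S|)%N.
Proof.
move=> Hu Ha; rewrite -(size_map fst) cardE; apply: uniq_leq_size => // z /mapP [d Hd ->].
by rewrite mem_enum; exact: (allP Ha).
Qed.

Lemma nonbridge_cycle (S : {set E}) e : e \in S ->
  connect (adjS src tgt (S :\ e)) (tgt e) (src e) ->
  exists ds0, [/\ walkb (tgt e) ds0, wend (tgt e) ds0 = src e,
     all (fun d => d.1 \in S :\ e) ds0 & is_cycle src tgt ((e, true) :: ds0)].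
Proof.
move=> eS /connectP [p Hp Hl].
move: Hl; case: (shortenP Hp) => p' Hp' Hu _ Hl.
case: (darts_of_path Hp') => ds [Hw Hm Ha].
have Hend : wend (tgt e) ds = src e by rewrite /wend Hm Hl.
exists ds; split => //.
move: Hu; rewrite lastI rcons_uniq -Hl => /andP [H1 H2].
rewrite /is_cycle /=; apply/and4P; split => //.
- exact: walk_cycle_path.
- rewrite (walk_uniq_edges Hw) ?Hm ?lastI -?Hl ?rcons_uniq ?H1 // andbT; apply/mapP => [[d Hd He]].
  by have := allP Ha _ Hd; rewrite -He setD11.
- by rewrite (walk_tails Hw) Hm /dtail /=.
- by rewrite (walk_tails Hw) Hm.
Qed.

Definition supp (z : chain) : {set E} := [set e | z e != 0].

Lemma sum_delta (T : finType) (P : pred T) (a : T) :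
  \sum_(x | P x) ((x == a)%:R : 'Z_m) = (P a)%:R.
Proof.
rewrite big_mkcond (bigD1 a) //= big1 => [|f fe]; last by rewrite (negbTE fe); case: (P f).
by rewrite eqxx addr0; case: (P a).
Qed.

Lemma sum_part (g : E -> V) (A : {set V}) (F : E -> 'Z_m) :
  \sum_(v in A) \sum_(f | g f == v) F f = \sum_(f | g f \in A) F f.
Proof.
rewrite (partition_big g (mem A)) //=; apply: eq_bigr => v vA; apply: eq_bigl => f.
by case: eqP => [->|_]; rewrite ?vA ?andbF.
Qed.

Lemma cut_sum (z : chain) (A : {set V}) :
  \sum_(v in A) bnd z v = \sum_(f | tgt f \in A) z f - \sum_(f | src f \in A) z f.
Proof.
rewrite (eq_bigr (fun v => \sum_(f | tgt f == v) z f - \sum_(f | src f == v) z f)); last by move=> v _; rewrite ffunE.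
by rewrite sumrB !sum_part.
Qed.

Lemma cut_bridge (z : chain) e (A : {set V}) :
  (forall f, z f != 0 -> f != e -> (tgt f \in A) = (src f \in A)) ->
  tgt e \in A -> src e \notin A -> \sum_(v in A) bnd z v = z e.
Proof.
move=> Hcl Ht Hs; rewrite cut_sum (bigD1 e) //=.
have -> : \sum_(f | src f \in A) z f = \sum_(f | (src f \in A) && (f != e)) z f.
  apply: eq_bigl => f; case: eqP => [->|_]; by rewrite ?(negbTE Hs) ?andbT.
rewrite -addrA (_ : _ - _ = 0) ?addr0 //; apply/eqP; rewrite subr_eq0; apply/eqP.
rewrite big_mkcond [in RHS]big_mkcond; apply: eq_bigr => f _.
case: (eqVneq f e) => [->|fe]; rewrite ?andbF //= !andbT.
case: (eqVneq (z f) 0) => [->|zf]; first by do 2 case: ifP.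
by rewrite (Hcl _ zf fe).
Qed.

Lemma vdeltaE (w u v : V) : (vdelta w - vdelta u) v = (v == w)%:R - (v == u)%:R.
Proof. by rewrite !ffunE. Qed.

Lemma nonzero_ex (z : chain) : z != 0 -> exists f, z f != 0.
Proof.
move=> Hz; apply/existsP; apply: contraR Hz; rewrite negb_exists => /forallP H.
by apply/eqP/ffunP => f; rewrite ffunE; move: (H f); rewrite negbK => /eqP.
Qed.

Lemma bridge_step (z : chain) u w : bnd z = vdelta w - vdelta u -> z != 0 ->
  (forall e, z e != 0 -> ~~ connect (adjS src tgt (supp z :\ e)) (tgt e) (src e)) ->
  exists f, (src f = u /\ z f = 1) \/ (tgt f = u /\ z f = -1).
Proof.
move=> Hb Hz Hbr.
have key : forall e, z e != 0 -> exists A : {set V},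
    [/\ tgt e \in A, src e \notin A & z e = (w \in A)%:R - (u \in A)%:R].
  move=> e ze; exists [set v | connect (adjS src tgt (supp z :\ e)) (tgt e) v].
  have Ht : tgt e \in [set v | connect (adjS src tgt (supp z :\ e)) (tgt e) v]
    by rewrite inE connect0.
  have Hs : src e \notin [set v | connect (adjS src tgt (supp z :\ e)) (tgt e) v]
    by rewrite inE; exact: Hbr.
  split => //; rewrite -(cut_bridge _ Ht Hs); last first.
    move=> f zf fe; rewrite !inE.
    have Hf : f \in supp z :\ e by rewrite !inE fe zf.
    have H1 : adjS src tgt (supp z :\ e) (src f) (tgt f)
      by apply/existsP; exists f; rewrite Hf !eqxx.
    have H2 : adjS src tgt (supp z :\ e) (tgt f) (src f)
      by apply/existsP; exists f; rewrite Hf !eqxx orbT.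
    apply/idP/idP => H; apply: connect_trans H _; exact: connect1.
  rewrite Hb; under eq_bigr do rewrite vdeltaE.
  by rewrite sumrB !sum_delta.
case: (boolP [exists f, (z f != 0) && ((src f == u) || (tgt f == u))]).
  case/existsP => f /andP [zf Hor]; exists f.
  have [A [Ht Hs Hzf]] := key f zf.
  case/orP: Hor => [/eqP Hsu|/eqP Htu].
    left; split => //; move: zf; rewrite Hzf -Hsu (negbTE Hs) subr0.
    by case: (w \in A); rewrite ?eqxx ?mulr1n.
  right; split => //; move: zf; rewrite Hzf -Htu Ht.
  by case: (w \in A); rewrite ?mulr1n ?mulr0n ?subrr ?eqxx // sub0r.
rewrite negb_exists => /forallP Hno.
have Hbu : bnd z u = 0.
  rewrite ffunE !big1 ?subrr // => f /eqP H; move: (Hno f);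
  by rewrite H eqxx ?orbT /= andbT negbK => /eqP.
have Huw : u = w.
  apply/eqP; apply: contraT => Hne; move: Hbu; rewrite Hb vdeltaE (negbTE Hne) eqxx.
  by rewrite mulr0n mulr1n sub0r => /eqP; rewrite oppr_eq0 oner_eq0.
have [f zf] := nonzero_ex Hz; have [A [_ _ Hzf]] := key f zf.
by move: zf; rewrite Hzf Huw subrr eqxx.
Qed.

Variable v0 : V.
Local Notation C := (cover_vtx src tgt m v0).
Local Notation adj := (@cover_adj _ _ src tgt m v0).

Lemma adj_sym : symmetric adj.
Proof.
move=> x y; apply/existsP/existsP => [[e He]|[e He]]; exists e; by rewrite orbC.
Qed.

Lemma bndMn (c : chain) k : bnd (c *+ k) = bnd c *+ k.
Proof. elim: k => [|k IH]; by rewrite ?mulr0n ?bnd0 // !mulrS bndD IH. Qed.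

Lemma step (a : C) d : dtl d == (val a).1 ->
  exists b : C, val b = (dhd d, (val a).2 + dch d) /\ adj a b.
Proof.
case: a => [[x c] Hp] /= Hd.
have Hp' : @cover_pred _ _ src tgt m v0 (dhd d, c + dch d).
  move: Hp; rewrite /cover_pred /= bndD bnd_dch (eqP Hd) => /eqP ->.
  by rewrite addrC addrA subrK.
exists (exist (@cover_pred _ _ src tgt m v0) _ Hp'); split => //; apply/existsP; exists d.1.
rewrite /=; clear Hp'; move: Hd; case: d => e [] /eqP /= Hd; rewrite /dtail /dhead /= in Hd *.
  by rewrite Hd !eqxx.
by rewrite Hd /dch /= subrK !eqxx orbT.
Qed.

Lemma lift (a : C) ds : walkb (val a).1 ds ->
  exists b : C, val b = (wend (val a).1 ds, (val a).2 + chn ds) /\ connect adj a b.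
Proof.
elim: ds a => [|d ds IH] a /=.
  by move=> _; exists a; rewrite /chn big_nil addr0 /wend /=; case: (val a).
case/andP => Hd Hw; have [a1 [Ha1 Hadj]] := step Hd.
have := IH a1; rewrite Ha1 /= => /(_ Hw) [b [Hb Hc]]; exists b; split.
  by rewrite Hb /chn big_cons -addrA.
by apply: connect_trans Hc; exact: connect1.
Qed.

Lemma cover_eq (a b : C) : (val a).2 = (val b).2 -> a = b.
Proof.
case: a b => [[u c] Ha] [[w c'] Hb] /= Hc; subst c'; apply: val_inj => /=.
move: Ha Hb; rewrite /cover_pred /= => /eqP -> /eqP /(canRL (subrK _)); rewrite subrK => H.
have := congr1 (fun f : {ffun V -> 'Z_m} => f u) H; rewrite /= !ffunE eqxx.
by case: eqP => [->//|_] /eqP; rewrite oner_eq0.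
Qed.

Lemma bnd_diff (a b : C) : bnd ((val b).2 - (val a).2) = vdelta (val b).1 - vdelta (val a).1.
Proof.
case: a b => [[u c] Ha] [[w c'] Hb] /=; move: Ha Hb; rewrite /cover_pred /=.
rewrite bndD bndN => /eqP -> /eqP ->; by rewrite opprB addrA subrK.
Qed.

Lemma supp_step (z : chain) d : z d.1 = dch d d.1 -> supp (z - dch d) = supp z :\ d.1.
Proof.
move=> H; apply/setP => g; rewrite !inE !ffunE.
case: (eqVneq g d.1) => [->|gd]; first by rewrite H subrr eqxx.
case: d gd H => e b /= gd _; rewrite /dch; case: b; rewrite /= ?ffunE (negbTE gd) ?mulr0n ?oppr0 ?subr0 ?addr0 //.
Qed.

Lemma chn_cons d ds : chn (d :: ds) = dch d + chn ds.
Proof. by rewrite /chn big_cons. Qed.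

Lemma dch_off d g : d.1 != g -> dch d g = 0.
Proof.
case: d => e b /= Hd; rewrite /dch; case: b; rewrite /= ?ffN ffunE eq_sym (negbTE Hd) //.
by rewrite mulr0n oppr0.
Qed.

Lemma chn_off ds g : all (fun d => d.1 != g) ds -> chn ds g = 0.
Proof.
elim: ds => [|d ds IH] /=; first by rewrite /chn big_nil ffunE.
by case/andP=> Hd Ha; rewrite chn_cons ffD IH // addr0 dch_off.
Qed.

Lemma supp_eq0 (z : chain) : #|supp z| = 0%N -> z = 0.
Proof.
move/eqP; rewrite cards_eq0 => /eqP H; apply/eqP; apply: contraT => /nonzero_ex [f zf].
have : f \in supp z by rewrite inE.
by rewrite H inE.
Qed.

Definition zd (a b : C) : chain := (val b).2 - (val a).2.

Lemma reduce (a b : C) : zd a b != 0 ->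
  (forall e, zd a b e != 0 -> ~~ connect (adjS src tgt (supp (zd a b) :\ e)) (tgt e) (src e)) ->
  exists a' : C, [/\ adj a a', (#|supp (zd a' b)| < #|supp (zd a b)|)%N
     & supp (zd a' b) \subset supp (zd a b)].
Proof.
rewrite /zd; set z := (val b).2 - (val a).2 => Hz Hbr.
have [f Hf] := bridge_step (bnd_diff a b) Hz Hbr.
have [d [Hd1 Hdt Hdz]] : exists d, [/\ d.1 = f, dtl d == (val a).1 & z d.1 = dch d d.1].
  case: Hf => [[Hs Hzf]|[Ht Hzf]]; [exists (f, true) | exists (f, false)];
    rewrite /dtail /dch /= ?Hs ?Ht eqxx; split => //; rewrite Hzf ?ffN ffunE eqxx //.
have [a' [Ha' Hadj]] := step Hdt; exists a'; rewrite Ha' /=.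
have -> : (val b).2 - ((val a).2 + dch d) = z - dch d by rewrite opprD addrA.
rewrite supp_step //; split => //; last exact: subD1set.
rewrite (cardsD1 d.1 (supp z)) inE Hd1.
have : z f != 0 by case: Hf => [[_ ->]|[_ ->]]; rewrite ?oppr_eq0 oner_eq0.
by move=> ->.
Qed.

Lemma walk_of_conn S u x : connect (adjS src tgt S) u x ->
  exists W, [/\ walkb u W, wend u W = x & all (fun d => d.1 \in S) W].
Proof.
move/connectP => [p Hp ->]; have [W [Hw Hm Ha]] := darts_of_path Hp.
by exists W; rewrite /wend Hm.
Qed.

Lemma lift_iter (ds : seq (E * bool)) x : walkb x ds -> wend x ds = x ->
  forall k (a : C), (val a).1 = x ->
  exists b : C, val b = (x, (val a).2 + chn ds *+ k) /\ connect adj a b.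
Proof.
move=> Hw He; elim=> [|k IH] a Ha.
  by exists a; rewrite mulr0n addr0; split => //; case: (val a) Ha => ?? /= ->.
have [b [Hb Hc]] := IH a Ha.
have := lift (a := b) (ds := ds); rewrite Hb /= => /(_ Hw) [b' [Hb' Hc']].
exists b'; split; last exact: connect_trans Hc Hc'.
by rewrite Hb' He mulrS (addrC (chn ds)) addrA.
Qed.

Hypothesis conn : connected_graph src tgt.

Lemma cycle_reduce (a b : C) e : zd a b e != 0 ->
  connect (adjS src tgt (supp (zd a b) :\ e)) (tgt e) (src e) ->
  exists a' : C, connect adj a a' /\ (#|supp (zd a' b)| < #|supp (zd a b)|)%N.
Proof.
set S := supp (zd a b) => ze Hc.
have eS : e \in S by rewrite inE.
have [ds0 [Hw He Ha _]] := nonbridge_cycle eS Hc.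
set ds := (e, true) :: ds0.
have Hwd : walkb (src e) ds by rewrite /= /dtail eqxx.
have Hed : wend (src e) ds = src e by [].
set g := chn ds.
have ge : g e = 1.
  rewrite /g chn_cons ffD chn_off ?addr0 /dch /= ?ffunE ?eqxx //.
  by apply/allP => d Hd; have := allP Ha d Hd; rewrite !inE => /andP [].
have gS : forall f, f \notin S -> g f = 0.
  move=> f fS; rewrite /g chn_cons ffD chn_off ?dch_off ?addr0 //=.
    by apply: contraNneq fS => <-.
  apply/allP => d Hd; have := allP Ha d Hd => /setD1P [_ Hd1]; by apply: contraNneq fS => <-.
have bg : bnd g = 0 by rewrite (bnd_chn Hwd) Hed subrr.
set k := nat_of_ord (zd a b e).
have [W [HW HWe _]] := walk_of_conn (conn (val a).1 (src e)).
have [a1 [Ha1 Hc1]] := lift HW.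
have Ha1s : (val a1).1 = src e by rewrite Ha1 /= HWe.
have [a2 [Ha2 Hc2]] := lift_iter Hwd Hed k Ha1s.
have Hp3 : @cover_pred _ _ src tgt m v0 ((val a).1, (val a).2 + g *+ k).
  have := valP a; rewrite /cover_pred /= bndD bndMn bg mul0rn addr0.
  by case: (val a).
set a3 : C := exist (@cover_pred _ _ src tgt m v0) _ Hp3.
have [a4 [Ha4 Hc4]] := lift (a := a3) HW.
have a42 : a4 = a2.
  apply: val_inj; rewrite Ha4 Ha2 Ha1 /= HWe; congr pair.
  by rewrite -!addrA (addrC (g *+ k)).
exists a3; split.
  apply: connect_trans Hc1 (connect_trans Hc2 _).
  by rewrite -a42 (sym_connect_sym adj_sym); exact: Hc4.
have Hsub : supp (zd a3 b) \subset S :\ e.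
  apply/subsetP => f; rewrite !inE /zd /= opprD addrA ffD ffN ffunMnE.
  case: (eqVneq f e) => [->|fe] /=.
    by rewrite ge /k natr_Zp /zd subrr eqxx.
  apply: contraTneq => zf0; rewrite zf0 gS ?mul0rn ?subrr ?eqxx //.
  by rewrite inE; apply/negPn/eqP; exact: zf0.
apply: leq_ltn_trans (subset_leq_card Hsub) _.
by rewrite (cardsD1 e S) eS.
Qed.

Lemma zd0 (a b : C) : zd a b = 0 -> a = b.
Proof. by move/subr0_eq => H; apply: cover_eq; rewrite H. Qed.

Lemma cover_connected (a b : C) : connect adj a b.
Proof.
move: {2}#|supp (zd a b)| (leqnn #|supp (zd a b)|) => k.
elim: k a => [|k IH] a Hk.
  have -> : a = b by apply: zd0; apply: supp_eq0; apply/eqP; rewrite -leqn0.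
  exact: connect0.
case: (eqVneq (zd a b) 0) => [/zd0 ->|Hz]; first exact: connect0.
case: (boolP [exists e, (zd a b e != 0) &&
    connect (adjS src tgt (supp (zd a b) :\ e)) (tgt e) (src e)]).
  case/existsP => e /andP [ze Hc]; have [a' [Hc' Hlt]] := cycle_reduce ze Hc.
  by apply: connect_trans Hc' (IH _ _); rewrite -ltnS (leq_trans Hlt Hk).
rewrite negb_exists => /forallP Hno.
have [a' [Hadj Hlt _]] : exists a' : C, [/\ adj a a', (#|supp (zd a' b)| < #|supp (zd a b)|)%N
     & supp (zd a' b) \subset supp (zd a b)].
  apply: reduce Hz _ => e ze; move: (Hno e); by rewrite ze.
by apply: connect_trans (connect1 Hadj) (IH _ _); rewrite -ltnS (leq_trans Hlt Hk).
Qed.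
End G.

Section G2.
Variables (V E : finType) (src tgt : E -> V) (m : nat) (v0 : V).
Local Notation C := (cover_vtx src tgt m v0).
Local Notation adj := (@cover_adj _ _ src tgt m v0).
Local Open Scope ring_scope.

Lemma walk_cons (a a' b : C) k : adj a a' -> walk_len adj a' b k -> walk_len adj a b k.+1.
Proof.
move=> Ha /existsP [p /andP [Hp Hl]]; apply/existsP; exists (cons_tuple a' p).
by rewrite /= Ha Hp.
Qed.

Lemma short_walk L : (forall ds, is_cycle src tgt ds -> (L < size ds)%N) ->
  forall (a b : C), (#|supp (zd a b)| <= L)%N ->
  exists2 k, (k <= #|supp (zd a b)|)%N & walk_len adj a b k.
Proof.
move=> Hg a b.
move: {2}#|supp (zd a b)| (leqnn #|supp (zd a b)|) => k.
elim: k a => [|k IH] a Hk HL.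
  have -> : a = b by apply: zd0; apply: supp_eq0; apply/eqP; rewrite -leqn0.
  by exists 0%N => //; apply/existsP; exists [tuple]; rewrite /= eqxx.
case: (eqVneq (zd a b) 0) => [/zd0 ->|Hz].
  by exists 0%N => //; apply/existsP; exists [tuple]; rewrite /= eqxx.
have [a' [Hadj Hlt _]] : exists a' : C, [/\ adj a a', (#|supp (zd a' b)| < #|supp (zd a b)|)%N
     & supp (zd a' b) \subset supp (zd a b)].
  apply: reduce Hz _ => e ze; apply/negP => Hc.
  have eS : e \in supp (zd a b) by rewrite inE.
  have [ds0 [_ _ Ha Hcyc]] := nonbridge_cycle eS Hc.
  have := Hg _ Hcyc; rewrite ltnNge; case/negP; apply: leq_trans HL.
  apply: size_uniq_le; first by case/and4P: Hcyc.
  rewrite /= eS /=; apply/allP => d Hd; have := allP Ha d Hd; by case/setD1P.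
have [j Hj Hw] := IH a' (leq_trans Hlt Hk) (leq_trans (ltnW Hlt) HL).
by exists j.+1; [exact: leq_ltn_trans Hj Hlt | exact: walk_cons Hadj Hw].
Qed.
End G2.


Lemma find_iota_le (P : pred nat) M i : P i -> (find P (iota 0 M) <= i)%N.
Proof.
move=> Hi; case: (ltnP i M) => HM.
  rewrite leqNgt; apply/negP => Hlt.
  by have := before_find 0 Hlt; rewrite nth_iota // add0n Hi.
by apply: leq_trans HM; rewrite -{2}(size_iota 0 M) find_size.
Qed.

Lemma find_iota_spec (P : pred nat) M : (find P (iota 0 M) < M)%N -> P (find P (iota 0 M)).
Proof.
move=> H; have Hhas : has P (iota 0 M) by rewrite has_find size_iota.
by have := nth_find 0 Hhas; rewrite nth_iota ?add0n.
Qed.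

Section GD.
Variables (T : finType) (adj : rel T).

Lemma gdist_le x y k : walk_len adj x y k -> (gdist adj x y <= k)%N.
Proof. exact: find_iota_le. Qed.

Lemma gdist_size x y : (gdist adj x y <= #|T|)%N.
Proof. by rewrite /gdist -{2}(size_iota 0 #|T|) find_size. Qed.

Lemma gdist_walk x y : connect adj x y -> walk_len adj x y (gdist adj x y).
Proof.
move/connectP => [p Hp Hl]; move: Hl; case: (shortenP Hp) => p' Hp' Hu _ Hl.
have Hs : (size p' < #|T|)%N.
  rewrite cardE; apply: (uniq_leq_size (s1 := x :: p')) => // z _.
  by rewrite mem_enum.
have Hw : walk_len adj x y (size p').
  by apply/existsP; exists (in_tuple p'); rewrite /= Hp' Hl eqxx.
have Hhas : has (walk_len adj x y) (iota 0 #|T|).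
  by apply/hasP; exists (size p'); rewrite // mem_iota.
have := nth_find 0 Hhas; rewrite nth_iota ?add0n //.
by rewrite -{2}(size_iota 0 #|T|) -has_find.
Qed.
End GD.

Section ZN.
Variable m : nat.
Local Open Scope ring_scope.
Implicit Types (k a b : 'Z_m).

Definition znP k (j : nat) : bool := (k == j%:R) || (k == - j%:R).
Definition zn k : nat := find (znP k) (iota 0 (nat_of_ord k).+1).

Lemma zn_spec k : znP k (zn k).
Proof.
have Hhas : has (znP k) (iota 0 (nat_of_ord k).+1).
  by apply/hasP; exists (nat_of_ord k); rewrite ?mem_iota //= /znP natr_Zp eqxx.
by have := nth_find 0 Hhas; rewrite nth_iota ?add0n // -{2}(size_iota 0 (nat_of_ord k).+1) -has_find.
Qed.

Lemma zn_min k i : znP k i -> (zn k <= i)%N.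
Proof. exact: find_iota_le. Qed.

Lemma zn0 : zn 0 = 0%N.
Proof. by apply/eqP; rewrite -leqn0; apply: zn_min; rewrite /znP eqxx. Qed.

Lemma zn_eq0 k : zn k = 0%N -> k = 0.
Proof. by move=> H; have := zn_spec k; rewrite H /znP oppr0 orbb => /eqP. Qed.

Lemma natrB_pm (i j : nat) : exists2 l, (l <= i + j)%N & znP (i%:R - j%:R : 'Z_m) l.
Proof.
case: (leqP j i) => H.
  by exists (i - j)%N; [exact: leq_trans (leq_subr _ _) (leq_addr _ _) | rewrite /znP natrB // eqxx].
exists (j - i)%N; first exact: leq_trans (leq_subr _ _) (leq_addl _ _).
rewrite /znP natrB; last exact: ltnW.
by rewrite opprB eqxx orbT.
Qed.

Lemma znD a b : (zn (a + b)%R <= zn a + zn b)%N.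
Proof.
have := zn_spec a; have := zn_spec b; rewrite /znP.
move: (zn a) (zn b) => i j /orP [] /eqP -> /orP [] /eqP ->;
 first [ by apply: zn_min; rewrite /znP -natrD eqxx
       | by apply: zn_min; rewrite /znP -opprD -natrD eqxx orbT
       | by have [l Hl Hp] := natrB_pm i j; apply: leq_trans (zn_min Hp) Hl
       | by have [l Hl Hp] := natrB_pm j i; rewrite addrC addnC; apply: leq_trans (zn_min Hp) Hl ].
Qed.

Lemma znN a : (zn (- a)%R <= zn a)%N.
Proof.
have := zn_spec a; move: (zn a) => i Hi; apply: zn_min; move: Hi; rewrite /znP.
by case/orP => /eqP ->; rewrite ?opprK eqxx ?orbT.
Qed.

Lemma zn_le_val k : (zn k <= nat_of_ord k)%N.
Proof. by apply: zn_min; rewrite /znP natr_Zp eqxx. Qed.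
End ZN.

Lemma pow_bound n p : (n * p <= p.+1 ^ n)%N.
Proof.
elim: n => [|n IH]; first by rewrite mul0n.
rewrite mulSnr expnS mulSn; apply: leq_add => //; apply: leq_pmulr; by rewrite expn_gt0.
Qed.

Section W.
Variables (V E : finType) (src tgt : E -> V) (m : nat).
Local Notation chain := {ffun E -> 'Z_m}.
Local Open Scope ring_scope.

Definition nrmS (Is : {set E}) (z : chain) : nat := (\sum_(e in Is) zn (z e))%N.

Lemma nrmD Is (x y : chain) : (nrmS Is (x + y)%R <= nrmS Is x + nrmS Is y)%N.
Proof. rewrite /nrmS -big_split /=; apply: leq_sum => e _; rewrite ffD; exact: znD. Qed.

Lemma nrm0 Is : nrmS Is (0 : chain) = 0%N.
Proof. by rewrite /nrmS big1 // => e _; rewrite ffunE zn0. Qed.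

Lemma nrm_dch Is d : (nrmS Is (dch m d) <= 1)%N.
Proof.
rewrite /nrmS; apply: leq_trans (_ : _ <= \sum_e zn (dch m d e))%N _.
  by rewrite [X in (_ <= X)%N](bigID (mem Is)) /= leq_addr.
rewrite (bigD1 d.1) //= big1 ?addn0 => [|e He]; last by rewrite dch_off 1?eq_sym // zn0.
apply: zn_min; case: d => e [] /=; rewrite /dch /znP /= ?ffN ffunE eqxx ?eqxx //.
by rewrite orbT.
Qed.

Lemma nrm_sum Is (w : seq (E * bool)) : (nrmS Is (\sum_(p <- w) dch m p)%R <= size w)%N.
Proof.
elim: w => [|p w IH]; first by rewrite big_nil nrm0.
rewrite big_cons; apply: leq_trans (nrmD _ _ _) _; exact: (leq_add (nrm_dch _ _) IH).
Qed.

Lemma word_dist_ge Is (a b : chain) : (nrmS Is (b - a)%R <= word_dist Is a b)%N.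
Proof.
have HMe : #|{ffun E -> 'Z_m}| = ((Zp_trunc m).+2 ^ #|E|)%N by rewrite card_ffun card_ord.
rewrite /word_dist; move: #|{ffun E -> 'Z_m}| HMe => M HMe.
case: (ltnP (find (word_len Is a b) (iota 0 M)) M) => HM.
  have := find_iota_spec HM; case/existsP => w /andP [_ /eqP Hw].
  rewrite -Hw -[X in (_ <= X)%N](size_tuple w); exact: nrm_sum.
have Hp := pow_bound #|E| (Zp_trunc m).+1; rewrite -HMe in Hp.
apply: leq_trans (leq_trans Hp HM).
have H1 : (nrmS Is (b - a)%R <= \sum_(e in Is) (Zp_trunc m).+1)%N.
  apply: leq_sum => e _; apply: leq_trans (zn_le_val _) _; rewrite -ltnS; exact: ltn_ord.
have H2 : (\sum_(e in Is) (Zp_trunc m).+1 <= \sum_(e : E) (Zp_trunc m).+1)%N.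
  by rewrite [X in (_ <= X)%N](bigID (mem Is)) /= leq_addr.
apply: leq_trans H1 (leq_trans H2 _).
by rewrite sum_nat_const.
Qed.
End W.

Section DQ.
Variables (R : realFieldType) (V E : finType) (src tgt : E -> V) (m : nat) (v0 : V) (N : nat).
Local Notation C := (cover_vtx src tgt m v0).
Local Notation adj := (@cover_adj _ _ src tgt m v0).
Local Notation chain := {ffun E -> 'Z_m}.
Local Open Scope ring_scope.
Hypothesis HN : forall e : E,
  #|[set T : {set E} | spanning_treeb src tgt T & e \notin T]| = N.

Lemma sum_tree_cnt e :
  (\sum_(T : {set E} | spanning_treeb src tgt T) (e \notin T : nat))%N = N.
Proof.
rewrite -(HN e) -sum1_card [RHS](eq_bigl (fun T => spanning_treeb src tgt T && (e \notin T))); last by move=> T; rewrite inE.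
rewrite [RHS]big_mkcondr /=; apply: eq_bigr => T _.
by case: (e \notin T).
Qed.

Lemma adj_dch (a b : C) : adj a b -> exists d, (val b).2 = (val a).2 + dch m d.
Proof.
case/existsP => e /orP [/andP [/andP [_ _] /eqP H] | /andP [/andP [_ _] /eqP H]].
  by exists (e, true).
by exists (e, false); rewrite /dch /= H addrK.
Qed.

Lemma wd_adj T (a b : C) d : (val b).2 = (val a).2 + dch m d ->
  (word_dist (~: T) (cloud T (val a).2) (cloud T (val b).2) <= (d.1 \notin T))%N.
Proof.
move=> Hb; rewrite /word_dist; apply: find_iota_le; apply/existsP.
have Hd : (if d.2 then edelta m d.1 else - edelta m d.1) = dch m d by [].
case: (boolP (d.1 \in T)) => HT /=.
  exists [tuple]; rewrite /= big_nil eq_sym subr_eq0; apply/eqP/ffunP => f.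
  rewrite !ffunE Hb ffD; case: ifP => // fT; rewrite dch_off ?addr0 //.
  by apply: contraTneq HT => ->; rewrite fT.
exists [tuple d]; rewrite /= inE HT /= big_cons big_nil addr0 Hd; apply/eqP/ffunP => f.
rewrite ffD ffN !ffunE Hb ffD; case: ifP => fT; last by rewrite addrC addKr.
by rewrite subr0 dch_off //; apply: contraNneq HT => ->.
Qed.

Lemma dQn_adj (a b : C) : adj a b -> dQn R N a b <= 1.
Proof.
move=> /adj_dch [d Hb]; rewrite /dQn.
have H : \sum_(T | spanning_treeb src tgt T)
    (word_dist (~: T) (cloud T (val a).2) (cloud T (val b).2))%:R <= (N%:R : R).
  rewrite -(sum_tree_cnt d.1) natr_sum; apply: ler_sum => T _; rewrite ler_nat; exact: wd_adj.
case: (eqVneq N 0%N) => [->|N0]; first by rewrite invr0 mul0r ler01.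
rewrite -[X in _ <= X](mulVf (_ : N%:R != 0 :> R)); last by rewrite pnatr_eq0.
apply: ler_wpM2l => //; by rewrite invr_ge0 ler0n.
Qed.

Lemma dQn_ge (a b : C) : N != 0%N -> (nrmS setT (zd a b))%:R <= dQn R N a b.
Proof.
move=> N0; rewrite /dQn.
have H : (N * nrmS setT (zd a b))%N =
    (\sum_(T | spanning_treeb src tgt T) \sum_(e in ~: T) zn (zd a b e))%N.
  rewrite (exchange_big_dep predT) //= /nrmS big_distrr /=.
  apply: eq_big => [e|e _]; first by rewrite inE.
  rewrite (eq_bigl (fun T => T \in [set T | spanning_treeb src tgt T & e \notin T])); last first.
    by move=> T; rewrite !inE.
  by rewrite sum_nat_const HN.
have -> : (nrmS setT (zd a b))%:R = N%:R^-1 * (N * nrmS setT (zd a b))%:R :> R.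
  by rewrite natrM mulrA mulVf ?mul1r // pnatr_eq0.
rewrite H natr_sum; apply: ler_wpM2l; first by rewrite invr_ge0 ler0n.
apply: ler_sum => T _; rewrite ler_nat.
apply: leq_trans (word_dist_ge _ _ _); rewrite /nrmS leq_eqVlt; apply/orP; left; apply/eqP.
apply: eq_bigr => e; rewrite inE => eT; rewrite ffD ffN !ffunE (negbTE eT).
by [].
Qed.
End DQ.

Section Comp.
Variables (R : realFieldType) (V E : finType) (src tgt : E -> V) (m : nat) (v0 : V) (N : nat).
Local Notation C := (cover_vtx src tgt m v0).
Local Notation adj := (@cover_adj _ _ src tgt m v0).
Local Open Scope ring_scope.
Hypothesis HN : forall e : E,
  #|[set T : {set E} | spanning_treeb src tgt T & e \notin T]| = N.
Hypothesis conn : connected_graph src tgt.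
Local Notation dq := (@dQn R _ _ src tgt m v0 N).

Lemma supp_le_nrm (z : {ffun E -> 'Z_m}) : (#|supp z| <= nrmS setT z)%N.
Proof.
rewrite /nrmS (eq_bigl predT); last by move=> e; rewrite in_setT.
rewrite (bigID (mem (supp z))) /=; apply: leq_trans (leq_addr _ _).
rewrite -sum1_card; apply: leq_sum => e; rewrite inE => ze.
rewrite lt0n; apply: contra ze => /eqP /zn_eq0 ->; by rewrite eqxx.
Qed.

Lemma walk_dQ : (forall a b c : C, dq a c <= dq a b + dq b c) -> (forall a : C, dq a a = 0) ->
  forall (a : C) p, path adj a p -> dq a (last a p) <= (size p)%:R.
Proof.
move=> Htri Hdiag a p; elim: p a => [|a' p IH] a /=; first by rewrite Hdiag.
case/andP => Hadj Hp; apply: le_trans (Htri _ a' _) _.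
rewrite -add1n natrD lerD //; [exact: dQn_adj | exact: IH].
Qed.

Lemma comp_Q1 : (forall a b c : C, dq a c <= dq a b + dq b c) -> (forall a : C, dq a a = 0) ->
  forall a b : C, dq a b <= (gdist adj a b)%:R.
Proof.
move=> Htri Hdiag a b; have := gdist_walk (cover_connected conn a b).
case/existsP => p /andP [Hp /eqP Hl].
by have := walk_dQ Htri Hdiag Hp; rewrite size_tuple Hl.
Qed.

Lemma comp_Q2 : (forall a b : C, a <> b -> 0 < dq a b) -> (forall a : C, dq a a = 0) ->
  forall a b : C, (nrmS setT (zd a b))%:R <= dq a b.
Proof.
move=> Hpos Hdiag a b; case: (eqVneq N 0%N) => [N0|N0]; last exact: dQn_ge.
case: (classic (a = b)) => [<-|Hab].
  by rewrite /zd subrr nrm0 Hdiag.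
by have := Hpos _ _ Hab; rewrite /dQn N0 invr0 mul0r ltxx.
Qed.

Lemma comp_girth L : girth_ge src tgt L.+1 ->
  forall a b : C, (nrmS setT (zd a b) <= L)%N -> (gdist adj a b <= L)%N.
Proof.
move=> Hg a b HL.
have HS := leq_trans (supp_le_nrm (zd a b)) HL.
have [k Hk Hw] := short_walk (L := L) Hg HS.
apply: leq_trans (gdist_le Hw) (leq_trans Hk HS).
Qed.
End Comp.


Local Open Scope ring_scope.

Definition pb (P : Prop) : bool := if excluded_middle_informative P then true else false.
Lemma pbP (P : Prop) : reflect P (pb P).
Proof. by rewrite /pb; case: excluded_middle_informative => H; constructor. Qed.

Section RG.
Variables (R : realFieldType) (C : nat -> finType).
Local Notation X := {n : nat & C n}.
Definition Wp (x y : X) := projT1 x = projT1 y.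
Definition CF (f : X -> X -> R) := forall M : R, exists N0 : nat, forall x y : X,
  projT1 x <> projT1 y -> (N0 <= maxn (projT1 x) (projT1 y))%N -> M <= f x y.

Definition emb N0 (u : {i : 'I_N0 & C i}) : X := existT _ (val (projT1 u)) (projT2 u).

Definition Mx N0 (h : X -> X -> R) : R :=
  \big[Num.max/0]_(u : {i : 'I_N0 & C i}) \big[Num.max/0]_(v : {i : 'I_N0 & C i}) h (emb u) (emb v).

Lemma bigmax_ge0 (I : finType) (F : I -> R) : 0 <= \big[Num.max/0]_(i : I) F i.
Proof. apply: (big_rec (fun x => 0 <= x)) => // i x _ Hx; by rewrite le_max Hx orbT. Qed.

Lemma bigmax_ub (I : finType) (F : I -> R) i : F i <= \big[Num.max/0]_(i : I) F i.
Proof. by rewrite (bigD1 i) //= le_max lexx. Qed.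

Lemma bigmax_le (I : finType) (F : I -> R) c : 0 <= c -> (forall i, F i <= c) ->
  \big[Num.max/0]_(i : I) F i <= c.
Proof. move=> c0 H; apply: (big_rec (fun x => x <= c)) => // i x _ Hx; by rewrite ge_max Hx H. Qed.

Lemma Mx_ge0 N0 h : 0 <= Mx N0 h.
Proof. exact: bigmax_ge0. Qed.

Lemma Mx_ub N0 h (x y : X) : (projT1 x < N0)%N -> (projT1 y < N0)%N -> h x y <= Mx N0 h.
Proof.
case: x => n a; case: y => k b /= Hn Hk.
pose u : {i : 'I_N0 & C i} := existT _ (Ordinal Hn) a.
pose v : {i : 'I_N0 & C i} := existT _ (Ordinal Hk) b.
apply: le_trans (bigmax_ub _ u); apply: le_trans (bigmax_ub _ v); exact: lexx.
Qed.

Lemma Mx_le N0 h c : 0 <= c -> (forall x y : X, (projT1 x < N0)%N -> (projT1 y < N0)%N -> h x y <= c) ->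
  Mx N0 h <= c.
Proof.
move=> c0 H; apply: bigmax_le => // u; apply: bigmax_le => // v.
apply: H; exact: ltn_ord.
Qed.

Lemma CF_small (f : X -> X -> R) N0 M x y :
  (forall x y : X, projT1 x <> projT1 y -> (N0 <= maxn (projT1 x) (projT1 y))%N -> M <= f x y) ->
  projT1 x <> projT1 y -> f x y < M -> (projT1 x < N0)%N /\ (projT1 y < N0)%N.
Proof.
move=> H Hxy Hf; have : ~ (N0 <= maxn (projT1 x) (projT1 y))%N.
  by move=> /(H _ _ Hxy); rewrite leNgt Hf.
by move/negP; rewrite leq_max negb_or -!ltnNge => /andP.
Qed.

Lemma choiceN (f : X -> X -> R) : CF f -> exists N0f : R -> nat, forall M (x y : X),
  projT1 x <> projT1 y -> (N0f M <= maxn (projT1 x) (projT1 y))%N -> M <= f x y.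
Proof.
move=> H; exists (fun M => proj1_sig (constructive_indefinite_description _ (H M))).
move=> M; exact: proj2_sig (constructive_indefinite_description _ (H M)).
Qed.

Lemma UpperCross (f g : X -> X -> R) : CF f -> exists Mc : R -> R,
  [/\ nondecreasing_fun Mc, forall t, 0 <= Mc t &
      forall x y, projT1 x <> projT1 y -> g x y <= Mc (f x y)].
Proof.
case/choiceN => N0f HN0.
pose h t := fun x y : X => if (projT1 x != projT1 y) && (f x y <= t) then g x y else 0.
have small : forall t (x y : X), projT1 x <> projT1 y -> f x y <= t ->
    (projT1 x < N0f (t + 1)%R)%N /\ (projT1 y < N0f (t + 1)%R)%N.
  move=> t x y Hxy Hf; apply: (CF_small (HN0 (t + 1)) Hxy).
  by apply: le_lt_trans Hf _; rewrite ltrDl ltr01.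
exists (fun t => Mx (N0f (t + 1)) (h t)); split.
- move=> s t st; apply: Mx_le; first exact: Mx_ge0.
  move=> x y _ _; rewrite /h; case: ifP => [/andP [/eqP Hxy Hf]|_]; last exact: Mx_ge0.
  have Hft : f x y <= t by exact: le_trans Hf st.
  have [Hx Hy] := small t x y Hxy Hft.
  apply: le_trans (Mx_ub (h t) Hx Hy); by rewrite /h Hft; case: eqP.
- move=> t; exact: Mx_ge0.
- move=> x y Hxy; have [Hx Hy] := small (f x y) x y Hxy (lexx _).
  apply: le_trans (Mx_ub _ Hx Hy); rewrite /h lexx andbT; by case: eqP.
Qed.

Lemma fin_argmin (I : finType) (Q : pred I) (G : I -> R) :
  (exists i, Q i) -> exists i, Q i /\ forall j, Q j -> G i <= G j.
Proof.
case=> i0 Hi0; case: (arg_minP G Hi0) => i Hi Hmin; by exists i.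
Qed.

Lemma emb_surj N0 (x : X) : (projT1 x < N0)%N -> exists u : {i : 'I_N0 & C i}, emb u = x.
Proof. by case: x => n a /= Hn; exists (existT _ (Ordinal Hn) a). Qed.

Definition HWF (g : X -> X -> R) := forall S : X -> X -> Prop, (exists x y, S x y) ->
  exists x y, S x y /\ forall x' y', S x' y' -> g x y <= g x' y'.

Lemma HWF_mix (g : X -> X -> R) : (forall x y, Wp x y -> exists k : nat, g x y = k%:R) ->
  CF g -> HWF g.
Proof.
move=> Hnat Hcf S [x0 [y0 H0]].
have [x1 [y1 [H1 Hmin1]]] : exists x1 y1, S x1 y1 /\
    forall x y, S x y -> Wp x y -> g x1 y1 <= g x y.
  case: (classic (exists x y, S x y /\ Wp x y)) => [Hex|Hno]; last first.
    exists x0, y0; split => // x y Hs Hw; exfalso; apply: Hno; by exists x, y.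
  pose P k := pb (exists x y, S x y /\ Wp x y /\ g x y = k%:R).
  have HP : exists k, P k.
    case: Hex => x [y [Hs Hw]]; have [k Hk] := Hnat x y Hw.
    by exists k; apply/pbP; exists x, y.
  case: (ex_minnP HP) => k0 /pbP [x1 [y1 [Hs1 [Hw1 Hg1]]]] Hk0.
  exists x1, y1; split => // x y Hs Hw; have [k Hk] := Hnat x y Hw.
  rewrite Hg1 Hk ler_nat; apply: Hk0; apply/pbP; by exists x, y.
have [N0 HN0] := Hcf (g x1 y1 + 1).
pose Q (u : {i : 'I_N0 & C i} * {i : 'I_N0 & C i}) :=
  pb (S (emb u.1) (emb u.2) /\ ~ Wp (emb u.1) (emb u.2)).
have cross_in : forall x y, S x y -> ~ Wp x y -> g x y < g x1 y1 + 1 ->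
    exists u, Q u /\ emb u.1 = x /\ emb u.2 = y.
  move=> x y Hs Hw Hg; have [Hx Hy] := CF_small HN0 Hw Hg.
  have [ux Hux] := emb_surj Hx; have [uy Huy] := emb_surj Hy.
  exists (ux, uy); split => //=; apply/pbP; by rewrite Hux Huy.
have far : forall x y c, g c.1 c.2 <= g x1 y1 -> ~ g x y < g x1 y1 + 1 -> g c.1 c.2 <= g x y.
  move=> x y c Hc Hg; apply: le_trans Hc _; apply: ltW; apply: lt_le_trans (_ : _ < g x1 y1 + 1) _.
    by rewrite ltrDl ltr01.
  by rewrite leNgt; apply/negP.
case: (classic (exists u, Q u)) => [Hu|Hnu].
  have [u [Hqu Hmu]] := fin_argmin (fun u => g (emb u.1) (emb u.2)) Hu.
  have /pbP [Hsu _] := Hqu.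
  case: (lerP (g (emb u.1) (emb u.2)) (g x1 y1)) => Hc.
    exists (emb u.1), (emb u.2); split => // x y Hs.
    case: (classic (Wp x y)) => Hw; first exact: le_trans Hc (Hmin1 _ _ Hs Hw).
    case: (classic (g x y < g x1 y1 + 1)) => Hg; last exact: (far x y (emb u.1, emb u.2)).
    have [v [Hv [<- <-]]] := cross_in x y Hs Hw Hg; exact: Hmu.
  exists x1, y1; split => // x y Hs.
  case: (classic (Wp x y)) => Hw; first exact: Hmin1.
  case: (classic (g x y < g x1 y1 + 1)) => Hg; last exact: (far x y (x1, y1)).
  have [v [Hv [<- <-]]] := cross_in x y Hs Hw Hg.
  exact: le_trans (ltW Hc) (Hmu _ Hv).
exists x1, y1; split => // x y Hs.
case: (classic (Wp x y)) => Hw; first exact: Hmin1.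
case: (classic (g x y < g x1 y1 + 1)) => Hg; last exact: (far x y (x1, y1)).
have [v [Hv _]] := cross_in x y Hs Hw Hg; by exfalso; apply: Hnu; exists v.
Qed.

Lemma minl (x y : R) : Num.min x y <= x. Proof. by rewrite ge_min lexx. Qed.
Lemma minr (x y : R) : Num.min x y <= y. Proof. by rewrite ge_min lexx orbT. Qed.

Lemma choose2 (P : X -> X -> Prop) : (exists x y, P x y) -> {p : X * X | P p.1 p.2}.
Proof.
move=> H; have [x Hx] := constructive_indefinite_description _ H.
have [y Hy] := constructive_indefinite_description _ Hx.
by exists (x, y).
Qed.

Lemma LowerFun (f g : X -> X -> R) : HWF g ->
  (forall M, exists t0, forall x y, t0 <= f x y -> M <= g x y) ->
  exists rm : R -> R, [/\ nondecreasing_fun rm, tends_to_infty rm &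
     forall x y, rm (f x y) <= g x y].
Proof.
move=> Hw Hinf.
pose mt (t : R) : R := match excluded_middle_informative (exists x y, t <= f x y) with
  | left h => let p := sval (choose2 (Hw (fun x y => t <= f x y) h)) in g p.1 p.2
  | right _ => t end.
have mtE : forall t, (exists x y, t <= f x y) -> exists x y,
    [/\ t <= f x y, mt t = g x y & forall x' y', t <= f x' y' -> g x y <= g x' y'].
  move=> t h; rewrite /mt; case: excluded_middle_informative => [h'|//].
  case: (choose2 _) => [[x y] [H1 H2]] /=; by exists x, y.
have mtN : forall t, ~ (exists x y, t <= f x y) -> mt t = t.
  by move=> t h; rewrite /mt; case: excluded_middle_informative.
exists (fun t => Num.min t (mt t)); split.
- move=> s t st.
  case: (classic (exists x y, t <= f x y)) => [ht|ht]; last first.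
    by rewrite (mtN t ht) minxx; apply: le_trans (minl _ _) st.
  have hs : exists x y, s <= f x y by case: ht => x [y H]; exists x, y; exact: le_trans st H.
  have [x [y [Ht Hmt Hmint]]] := mtE t ht; have [x' [y' [Hs Hms Hmins]]] := mtE s hs.
  rewrite le_min !ge_min Hmt Hms st /= (Hmins x y (le_trans st Ht)) !orbT //.
- move=> M; have [t0 Ht0] := Hinf M; exists (Num.max M t0) => t.
  rewrite ge_max => /andP [HM Ht]; rewrite le_min HM /=.
  case: (classic (exists x y, t <= f x y)) => [ht|ht]; last by rewrite mtN.
  have [x [y [Hx -> _]]] := mtE t ht; apply: Ht0; exact: le_trans Hx.
- move=> x y; apply: le_trans (minr _ _) _.
  have [x' [y' [_ -> H]]] := mtE (f x y) (ex_intro _ x (ex_intro _ y (lexx _))).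
  exact: H.
Qed.

Definition finR (t : R) := exists L : nat, t <= L%:R.
Definition ceilR (t : R) : nat := match excluded_middle_informative (finR t) with
  | left h => ex_minn h | right _ => 0%N end.

Lemma ceilR_ge t : finR t -> t <= (ceilR t)%:R.
Proof. by move=> h; rewrite /ceilR; case: excluded_middle_informative => // h'; case: ex_minnP. Qed.

Lemma ceilR_min t L : t <= L%:R -> (ceilR t <= L)%N.
Proof.
move=> h; rewrite /ceilR; case: excluded_middle_informative => [h'|[]]; last by exists L.
case: ex_minnP => k _; exact.
Qed.

Lemma notfin_gt t : ~ finR t -> forall k : nat, k%:R < t.
Proof. by move=> h k; rewrite ltNge; apply/negP => H; apply: h; exists k. Qed.

Lemma UpperWithin (G : nat -> nat) : {homo G : a b / (a <= b)%N} ->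
  exists rpW : R -> R, [/\ nondecreasing_fun rpW, forall t, t <= rpW t &
     forall k : nat, (G k)%:R <= rpW k%:R].
Proof.
move=> Gm; exists (fun t => t + (if pb (finR t) then (G (ceilR t))%:R else 0)); split.
- move=> s t st; case: (pbP (finR t)) => ht; case: (pbP (finR s)) => hs.
  + apply: lerD => //; rewrite ler_nat; apply: Gm; apply: ceilR_min.
    exact: le_trans st (ceilR_ge ht).
  + by exfalso; apply: hs; case: ht => L HL; exists L; exact: le_trans st HL.
  + rewrite addr0; apply: ltW; apply: le_lt_trans (notfin_gt ht (ceilR s + G (ceilR s))).
    by rewrite natrD lerD // ceilR_ge.
  + by rewrite !addr0.
- by move=> t; rewrite lerDl; case: pb.
- move=> k; have hk : finR k%:R by exists k.
  case: (pbP (finR k%:R)) => // _; rewrite -natrD ler_nat.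
  apply: leq_trans (leq_addl _ _); apply: Gm; rewrite -(ler_nat R); exact: ceilR_ge.
Qed.

Lemma CF_cross (f g : X -> X -> R) : CF f -> (forall x y, ~ Wp x y -> g x y = f x y) -> CF g.
Proof.
move=> Hf Hg M; have [N0 HN0] := Hf M; exists N0 => x y Hxy HN; rewrite Hg //; exact: HN0.
Qed.

Theorem assemble (d dQ : X -> X -> R) (nr : X -> X -> nat) :
  (forall x y, 0 <= d x y) -> (forall x y, 0 <= dQ x y) ->
  CF d -> CF dQ ->
  (forall x y, Wp x y -> dQ x y <= d x y) ->
  (forall x y, Wp x y -> (nr x y)%:R <= dQ x y) ->
  (forall L, exists B : nat, forall x y, Wp x y -> (nr x y <= L)%N -> d x y <= B%:R) ->
  (forall x y, Wp x y -> exists k : nat, d x y = k%:R) ->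
  coarse_embedding d dQ id /\ coarse_embedding dQ d id.
Proof.
move=> d0 dQ0 CFd CFdQ Q1 Q2 Q3 Q4.
have tends_id : forall h : R -> R, (forall t, t <= h t) -> tends_to_infty h.
  by move=> h Hh M; exists M => t Ht; exact: le_trans Ht (Hh t).
split.
- pose g' x y := if projT1 x == projT1 y then (nr x y)%:R else dQ x y.
  have Hwf : HWF g'.
    apply: HWF_mix.
      by move=> x y Hw; exists (nr x y); rewrite /g' Hw eqxx.
    by apply: (CF_cross CFdQ) => x y Hw; rewrite /g'; case: eqP.
  have Hinf : forall M, exists t0, forall x y, t0 <= d x y -> M <= g' x y.
    move=> M; have [N0 HN0] := CFdQ M; set Bc := Mx N0 d.
    have cross : forall t0 x y, Bc + 1 <= t0 -> t0 <= d x y -> ~ Wp x y -> M <= g' x y.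
      move=> t0 x y H1 H2 Hw; rewrite /g'; case: eqP => // _.
      rewrite leNgt; apply/negP => Hlt; have [Hx Hy] := CF_small HN0 Hw Hlt.
      have := Mx_ub d Hx Hy; rewrite -/Bc => H3.
      have : Bc + 1 <= Bc by apply: le_trans H1 (le_trans H2 H3).
      by rewrite gerDl ler10.
    case: (classic (finR M)) => [[L HL]|Hnf].
      have [B HB] := Q3 L; exists (Num.max (Bc + 1) (B.+1)%:R) => x y.
      rewrite ge_max => /andP [H1 H2].
      case: (classic (Wp x y)) => Hw; last exact: (cross (Bc + 1) x y (lexx _) H1 Hw).
      rewrite /g' Hw eqxx; apply: le_trans HL _; rewrite ler_nat leqNgt; apply/negP => Hn.
      have := HB x y Hw (ltnW Hn) => H3.
      have : (B.+1)%:R <= (B%:R : R) by exact: le_trans H2 H3.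
      by rewrite ler_nat ltnn.
    exists (Num.max (Bc + 1) M) => x y; rewrite ge_max => /andP [H1 H2].
    case: (classic (Wp x y)) => Hw; last exact: (cross (Bc + 1) x y (lexx _) H1 Hw).
    exfalso; apply: Hnf; have [k Hk] := Q4 x y Hw; exists k; by rewrite -Hk.
  have [rm [rm_m rm_t rm_b]] := LowerFun Hwf Hinf.
  have [Mc [Mc_m Mc_0 Mc_b]] := UpperCross dQ CFd.
  exists rm, (fun t => t + Mc t); split; first exact: rm_m.
  split; first by move=> s t st; apply: lerD => //; exact: Mc_m.
  split; first exact: rm_t.
  split; first by apply: tends_id => t; rewrite lerDl.
  + move=> x y /=; split.
      apply: le_trans (rm_b x y) _; rewrite /g'; case: eqP => // Hw; exact: Q2.
    case: (classic (Wp x y)) => Hw.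
      by apply: le_trans (Q1 _ _ Hw) _; rewrite lerDl.
    by apply: le_trans (Mc_b _ _ Hw) _; rewrite lerDr.
- have Hwf : HWF d by apply: HWF_mix.
  have Hinf : forall M, exists t0, forall x y, t0 <= dQ x y -> M <= d x y.
    move=> M; have [N0 HN0] := CFd M; set Bc := Mx N0 dQ.
    exists (Num.max (Bc + 1) M) => x y; rewrite ge_max => /andP [H1 H2].
    case: (classic (Wp x y)) => Hw; first exact: le_trans H2 (Q1 _ _ Hw).
    rewrite leNgt; apply/negP => Hlt; have [Hx Hy] := CF_small HN0 Hw Hlt.
    have := Mx_ub dQ Hx Hy; rewrite -/Bc => H3.
    have : Bc + 1 <= Bc by apply: le_trans H1 H3.
    by rewrite gerDl ler10.
  have [rm [rm_m rm_t rm_b]] := LowerFun Hwf Hinf.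
  have [Bf HBf] : exists Bf : nat -> nat, forall L x y, Wp x y -> (nr x y <= L)%N -> d x y <= (Bf L)%:R.
    exists (fun L => proj1_sig (constructive_indefinite_description _ (Q3 L))).
    move=> L; exact: proj2_sig (constructive_indefinite_description _ (Q3 L)).
  pose G L := (\sum_(0 <= j < L.+1) Bf j)%N.
  have Gm : {homo G : a b / (a <= b)%N}.
    move=> a b ab; rewrite /G (@big_cat_nat _ _ _ a.+1 0 b.+1) //= leq_addr //.
  have GB : forall L, (Bf L <= G L)%N by move=> L; rewrite /G big_nat_recr //= leq_addl.
  have [rpW [rpW_m rpW_ge rpW_n]] := UpperWithin Gm.
  have [Mc [Mc_m Mc_0 Mc_b]] := UpperCross d CFdQ.
  exists rm, (fun t => rpW t + Mc t); split; first exact: rm_m.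
  split; first by move=> s t st; apply: lerD; [exact: rpW_m | exact: Mc_m].
  split; first exact: rm_t.
  split; first by apply: tends_id => t; apply: le_trans (rpW_ge t) _; rewrite lerDl.
  + move=> x y /=; split; first exact: rm_b.
    case: (classic (Wp x y)) => Hw.
      apply: le_trans (HBf _ _ _ Hw (leqnn _)) _; apply: le_trans (_ : _ <= (G (nr x y))%:R) _.
        by rewrite ler_nat.
      apply: le_trans (rpW_n _) _; apply: le_trans (rpW_m _ _ (Q2 _ _ Hw)) _.
      by rewrite lerDl.
    apply: le_trans (Mc_b _ _ Hw) _; rewrite lerDr.
    exact: le_trans (dQ0 x y) (rpW_ge _).
Qed.
End RG.


Lemma metric_nonneg (R : realFieldType) (X : Type) (f : X -> X -> R) :
  is_metric f -> forall x y, 0 <= f x y.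
Proof.
case=> Hd [_ [Hs Ht]] x y; have := Ht x y x; rewrite Hd (Hs y x) -mulr2n.
by rewrite pmulrn_lge0.
Qed.

Lemma existT_inj (C : nat -> Type) n (a b : C n) : existT C n a = existT C n b -> a = b.
Proof.
move=> H; have := congr1 (tagged_as (existT C n a)) H; by rewrite !tagged_asE.
Qed.

Unset Implicit Arguments.

Theorem mainTheorem6 (R : realFieldType) (m : nat)
    (V E : nat -> finType) (src tgt : forall n, E n -> V n) (v0 : forall n, V n)
    (N : nat -> nat)
    (d dQ : {n : nat & cover_vtx (src n) (tgt n) m (v0 n)} ->
            {n : nat & cover_vtx (src n) (tgt n) m (v0 n)} -> R) :
  (3 <= m)%N ->
  (forall n, connected_graph (src n) (tgt n)) ->
  (forall n, two_connected (src n) (tgt n)) ->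
  (forall n (e : E n),
      #|[set T : {set E n} | spanning_treeb (src n) (tgt n) T & e \notin T]| = N n) ->
  (forall L, exists N0, forall n, (N0 <= n)%N -> girth_ge (src n) (tgt n) L) ->
  coarse_disjoint_union
    (fun n (a b : cover_vtx (src n) (tgt n) m (v0 n)) =>
       (gdist (@cover_adj _ _ (src n) (tgt n) m (v0 n)) a b)%:R) d ->
  coarse_disjoint_union
    (fun n (a b : cover_vtx (src n) (tgt n) m (v0 n)) =>
       dQn R (N n) a b) dQ ->
  coarse_embedding d dQ id /\ coarse_embedding dQ d id.
Proof.
move=> _ Hconn _ HN Hgirth Hd HdQ.
pose Cf n : finType := cover_vtx (src n) (tgt n) m (v0 n).
have d0 := metric_nonneg (proj1 Hd); have dQ0 := metric_nonneg (proj1 HdQ).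
case: Hd => [[dd [dpos [dsym dtri]]] [dres [_ dinf]]].
case: HdQ => [[qd [qpos [qsym qtri]]] [qres [_ qinf]]].
have CFd : CF (C := Cf) d.
  move=> M; have [N0 HN0] := dinf M; exists N0 => [[n a] [k b]] /= Hnk Hmx; exact: HN0.
have CFdQ : CF (C := Cf) dQ.
  move=> M; have [N0 HN0] := qinf M; exists N0 => [[n a] [k b]] /= Hnk Hmx; exact: HN0.
pose nr (x y : {n : nat & Cf n}) : nat :=
  if projT1 x == projT1 y then nrmS setT (zd (projT2 x) (tagged_as x y)) else 0%N.
apply: (assemble (nr := nr)) => //.
- move=> [n a] [k b] /= Hw; rewrite /Wp /= in Hw; subst k.
  rewrite dres qres; apply: comp_Q1 => //.
    by move=> a1 b1 c1; rewrite -!qres; exact: qtri.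
  by move=> a1; rewrite -qres; exact: qd.
- move=> [n a] [k b] /= Hw; rewrite /Wp /= in Hw; subst k.
  rewrite qres /nr /= eqxx tagged_asE; apply: comp_Q2 => //.
    by move=> a1 b1 Hab; rewrite -qres; apply: qpos => H; apply: Hab; exact: existT_inj H.
  by move=> a1; rewrite -qres; exact: qd.
- move=> L; have [N0 HN0] := Hgirth L.+1.
  exists (maxn L (\max_(i < N0) #|Cf i|)) => [[n a] [k b]] /= Hw; rewrite /Wp /= in Hw; subst k.
  rewrite /nr /= eqxx tagged_asE dres ler_nat => Hn.
  case: (ltnP n N0) => HnN.
    apply: leq_trans (gdist_size _ _ _) _; apply: leq_trans (leq_maxr _ _).
    by rewrite (bigD1 (Ordinal HnN)) //= leq_maxl.
  apply: leq_trans (leq_maxl _ _); exact: comp_girth (HN0 _ HnN) _ _ Hn.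
- move=> [n a] [k b] /= Hw; rewrite /Wp /= in Hw; subst k.
  by rewrite dres; eexists.
Qed.
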